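(* Let $\mathcal C$ be a class of compact spaces. Then $\mathcal C^{(\perp)}$ coincides with the class of compact spaces $K$ such that every closed subspace of every continuous image of $K$ that belongs to $\mathcal C$ is metrizable.
   Context: For a class $\mathcal C$ of compact spaces, $\mathcal C^{(\perp)}$ is the class of compact spaces $K$ such that every continuous image of any closed subspace of $K$ that belongs to $\mathcal C$ is metrizable. *)

(* Defs.v *)
From HB Require Import structures.
From mathcomp Require Import all_boot all_order all_algebra.
From mathcomp Require Import all_classical all_reals topology.
From mathcomp Require Import Rstruct.
Set Implicit Arguments. Unset Strict Implicit. Unset Printing Implicit Defensive.
Import Order.TTheory GRing.Theory Num.Theory.
Local Open Scope classical_set_scope.
Local Open Scope ring_scope.

(* Compact spaces are compact Hausdorff spaces (convention of the paper). *)
Definition compact_space (T : topologicalType) : Prop :=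
  compact [set: T] /\ hausdorff_space T.

Definition metrizable (T : topologicalType) : Prop :=
  exists d : T -> T -> Rdefinitions.R,
    [/\ (forall x y, d x y = 0 <-> x = y),
        (forall x y, d x y = d y x),
        (forall x y z, d x z <= d x y + d y z) &
        (forall A : set T,
           open A <-> forall x, A x -> exists2 e, 0 < e & [set y | d x y < e] `<=` A)].

Definition homeomorphic (S T : topologicalType) : Prop :=
  exists (f : S -> T) (g : T -> S),
    [/\ continuous f, continuous g, cancel f g & cancel g f].

Definition class_of_compacta (C : topologicalType -> Prop) : Prop :=
  (forall T, C T -> compact_space T) /\
  (forall S T, homeomorphic S T -> C S -> C T).

(* L is a continuous image of the space S (L Hausdorff, i.e. a compact space). *)
Definition cont_image (S L : topologicalType) : Prop :=
  hausdorff_space L /\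
  exists f : S -> L, continuous f /\ (forall y, exists x, f x = y).

Definition perp_class (C : topologicalType -> Prop) (K : topologicalType) : Prop :=
  compact_space K /\
  forall F : set K, closed F ->
    forall L : topologicalType, cont_image (set_type F) L -> C L -> metrizable L.

Definition perp_class' (C : topologicalType -> Prop) (K : topologicalType) : Prop :=
  compact_space K /\
  forall L : topologicalType, cont_image K L ->
    forall F : set L, closed F -> C (set_type F) -> metrizable (set_type F).

(* Main.v *)
From HB Require Import structures.
Require Import Defs.
From mathcomp Require Import all_boot all_classical all_reals topology.
Set Implicit Arguments. Unset Strict Implicit. Unset Printing Implicit Defensive.
Local Open Scope classical_set_scope.


Section ST.
Context {K : topologicalType} (F : set K).

Lemma open_stP (U : set F) : open U <-> exists2 O : set K, open O & U = set_val @^-1` O.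
Proof.
split.
  by case=> O oO <-; exists O.
by case=> O oO ->; exists O.
Qed.

Lemma val_cts : continuous (set_val : F -> K).
Proof. exact: initial_continuous. Qed.

Lemma closed_stP (U : set F) : closed U <-> exists2 C : set K, closed C & U = set_val @^-1` C.
Proof.
rewrite -openC open_stP; split.
  case=> O oO e; exists (~` O); first by rewrite closedC.
  by rewrite -[U]setCK e.
case=> C cC ->; exists (~` C); first by rewrite openC.
by [].
Qed.

Lemma st_hausdorff : hausdorff_space K -> hausdorff_space F.
Proof.
rewrite !open_hausdorff => hK x y xy.
have : set_val x != set_val y.
  by apply: contra xy => /eqP e; apply/eqP/val_inj.
case/hK => -[A B] /= [xA yB] [oA oB /eqP AB].
exists (set_val @^-1` A, set_val @^-1` B) => /=.
  by move: xA yB; rewrite !in_setE.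
have vc := (continuousP _).1 (@val_cts).
split; [exact: vc|exact: vc|].
by apply/eqP; rewrite -preimage_setI AB preimage_set0.
Qed.

Lemma val_closed (B : set F) : closed F -> closed B -> closed (set_val @` B).
Proof.
move=> cF /closed_stP [C cC ->].
have e : (@set_val K F) @` ((@set_val K F) @^-1` C) = F `&` C.
  rewrite eqEsubset; split => x.
    by case=> y Cy <-; split => //; exact: set_valP.
  case=> Fx Cx; exists (exist _ x (mem_set Fx)) => //.
by rewrite e; exact: closedI.
Qed.


Lemma cts_into {X : topologicalType} (f : X -> F) :
  continuous (set_val \o f) -> continuous f.
Proof.
move=> cf; apply/continuousP => U /open_stP [O oO ->].
by rewrite -comp_preimage; exact: ((continuousP _).1 cf).
Qed.

Lemma st_compact : compact F -> compact [set: F].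
Proof.
move=> cF.
have [F0|/set0P [x0 Fx0]] := eqVneq F set0.
  have -> : [set: F] = set0.
    rewrite eqEsubset; split => // x _; exfalso; suff : (set0 : set K) (set_val x) by []; rewrite -F0; exact: set_valP.
  exact: compact0.
pose y0 : F := exist _ x0 (mem_set Fx0).
pose r (x : K) : F := match pselect (F x) with left h => exist _ x (mem_set h) | right _ => y0 end.
have rv : r \o set_val = id.
  apply: funext => y /=; apply: val_inj => /=; rewrite /r.
  case: pselect => [h//|h]; exfalso; exact: h (set_valP y).
have rc : {within F, continuous r}.
  apply/subspace_sigL_continuousP; rewrite /sigL rv; by move=> ? ?.
have := continuous_compact rc cF.
have -> // : r @` F = [set: F].
rewrite eqEsubset; split => // y _; exists (set_val y); first exact: set_valP.
by have := congr1 (fun h => h y) rv.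
Qed.
End ST.


Lemma metrizable_homeo (S T : topologicalType) :
  homeomorphic S T -> metrizable S -> metrizable T.
Proof.
case=> f [g [cf cg fg gf]] [d [d0 ds dt dop]].
exists (fun x y => d (g x) (g y)); split.
- move=> x y; rewrite d0; split; last by move=> ->.
  by move/(congr1 f); rewrite !gf.
- by move=> x y; exact: ds.
- by move=> x y z; exact: dt.
move=> A; split.
  move=> oA; have : open (f @^-1` A) by exact: ((continuousP _).1 cf).
  move=> /dop H x Ax; have [|e e0 sub] := H (g x); first by rewrite /= gf.
  by exists e => // y /sub /=; rewrite gf.
move=> H.
have -> : A = g @^-1` (f @^-1` A).
  by rewrite eqEsubset; split => x /=; rewrite gf.
apply: ((continuousP _).1 cg); apply/dop => s /= As.
have [e e0 sub] := H _ As; exists e => // s' ds'.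
have := sub (f s'); rewrite /= !fg; exact.
Qed.

Lemma homeo_sym (S T : topologicalType) : homeomorphic S T -> homeomorphic T S.
Proof. by case=> f [g [? ? ? ?]]; exists g, f. Qed.

Lemma separate_closed (T : topologicalType) : hausdorff_space T -> compact [set: T] ->
  forall A B : set T, closed A -> closed B -> A `&` B = set0 ->
  exists U V : set T, [/\ open U, open V, A `<=` U, B `<=` V & U `&` V = set0].
Proof.
move=> hT cT A B cA cB AB.
have nT := compact_normal hT cT.
have sn : set_nbhs A (~` B).
  apply/set_nbhsP; exists (~` B); split => //; first exact: closed_openC.
  by move=> x Ax Bx; have : (A `&` B) x by []; rewrite AB.
have [V snV clV] := nT A cA _ sn.
have [C [oC AC CV]] := (set_nbhsP _ _).1 snV.
exists C, (~` closure V); split => //.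
- exact/closed_openC/closed_closure.
- by move=> x Bx clx; exact: (clV x clx).
- rewrite eqEsubset; split => // x [Cx]; apply; apply: subset_closure; exact: CV.
Qed.


Section Adj.
Context {K L : topologicalType} (F : set K) (g : F -> L).

Definition adj (g' : F -> L) : Type := (L + set_type (~` F))%type.
HB.instance Definition _ := Choice.on (adj g).

Definition qmap (x : K) : adj g :=
  match pselect (F x) with
  | left h => inl (g (exist _ x (mem_set h)))
  | right h => inr (exist _ x (mem_set h))
  end.

Definition adj_open (U : set (adj g)) := open (qmap @^-1` U).

Program Definition adj_mixin := @isOpenTopological.Build (adj g) adj_open _ _ _.
Next Obligation. by rewrite /adj_open preimage_setT; exact: openT. Qed.
Next Obligation. by move=> ? ? ? ?; exact: openI. Qed.
Next Obligation. by move=> I f ofi; apply: bigcup_open => i _; exact: ofi. Qed.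
HB.instance Definition _ := adj_mixin.

Lemma qmap_cts : continuous qmap.
Proof. exact/continuousP. Qed.

Lemma adj_openE (U : set (adj g)) : open U = open (qmap @^-1` U).
Proof. by []. Qed.

Lemma adj_closedE (U : set (adj g)) : closed U <-> closed (qmap @^-1` U).
Proof. by rewrite -openC adj_openE -openC. Qed.

Lemma qmap_val (x : F) : qmap (set_val x) = inl (g x).
Proof.
rewrite /qmap; case: pselect => [h|h]; last by exfalso; exact: h (set_valP x).
by congr (inl (g _)); apply: val_inj.
Qed.

Lemma qmap_nF (x : K) (h : ~ F x) : qmap x = inr (exist _ x (mem_set h)).
Proof.
rewrite /qmap; case: pselect => [h'|h']; first by exfalso; exact: h h'.
by congr inr; apply: val_inj.
Qed.


Context (hK : hausdorff_space K) (cK : compact [set: K]) (cF : closed F)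
  (hL : hausdorff_space L) (cg : continuous g) (sg : forall y, exists x, g x = y).

Lemma qmap_surj (m : adj g) : exists x, qmap x = m.
Proof.
case: m => [l|y].
  by have [x <-] := sg l; exists (set_val x); exact: qmap_val.
have h : ~ F (set_val y) by have := set_valP y.
exists (set_val y); rewrite (qmap_nF h); congr inr; exact: val_inj.
Qed.

Lemma sat (A : set K) : qmap @^-1` (qmap @` A) =
  A `|` set_val @` (g @^-1` (g @` ((@set_val K F) @^-1` A))).
Proof.
rewrite eqEsubset; split => x.
  case=> a Aa e; case: (pselect (F x)) => Fx.
    right; pose x' : F := exist _ x (mem_set Fx).
    have ex : qmap x = inl (g x') := qmap_val x'.
    case: (pselect (F a)) => Fa.
      pose a' : F := exist _ a (mem_set Fa).
      have ea : qmap a = inl (g a') := qmap_val a'.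
      rewrite ea ex in e; case: e => e.
      by exists x' => //; exists a'.
    by rewrite (qmap_nF Fa) ex in e.
  left; case: (pselect (F a)) => Fa.
    pose a' : F := exist _ a (mem_set Fa).
    have ea : qmap a = inl (g a') := qmap_val a'.
    by rewrite ea (qmap_nF Fx) in e.
  rewrite (qmap_nF Fx) (qmap_nF Fa) in e; case: e => e.
  by rewrite -e.
case=> [Ax|[x' [a' Aa' ga] <-]]; first by exists x.
by exists (set_val a') => //; rewrite /= !qmap_val ga.
Qed.

Lemma compactF : compact [set: F].
Proof. apply: st_compact; exact: (subclosed_compact cF cK). Qed.

Lemma image_closed (B : set F) : closed B -> closed (g @` B).
Proof.
move=> cB; apply: compact_closed => //; apply: continuous_compact.
  exact: continuous_subspaceT.
exact: (subclosed_compact cB compactF).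
Qed.

Lemma qimage_closed (A : set K) : closed A -> closed (qmap @` A).
Proof.
move=> cA; apply/adj_closedE; rewrite sat; apply: closedU => //.
apply: val_closed => //; apply: preimage_closed => //.
apply: image_closed; apply: preimage_closed => //; move=> x _; exact: val_cts.
Qed.

Lemma fiber_closed (m : adj g) : closed (qmap @^-1` [set m]).
Proof.
apply/adj_closedE; have [x <-] := qmap_surj m.
have -> : [set qmap x] = qmap @` [set x].
  by rewrite eqEsubset; split => y; [move=> ->; exists x|case=> z -> <-].
apply: qimage_closed; exact/accessible_closed_set1/hausdorff_accessible.
Qed.

Lemma adj_hausdorff : hausdorff_space (adj g).
Proof.
rewrite open_hausdorff => m1 m2 m12.
have [|U [V [oU oV AU BV UV]]] := separate_closed hK cK (@fiber_closed m1) (@fiber_closed m2).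
  rewrite eqEsubset; split => // x [/= e1 e2]; move: m12; rewrite -e1 -e2 eqxx //.
exists (~` (qmap @` ~` U), ~` (qmap @` ~` V)) => /=.
  rewrite !in_setE; split.
    by case=> y nUy e; apply: nUy; apply: AU.
  by case=> y nVy e; apply: nVy; apply: BV.
split.
- exact/closed_openC/qimage_closed/open_closedC.
- exact/closed_openC/qimage_closed/open_closedC.
apply/eqP; rewrite eqEsubset; split => // m [h1 h2].
have [y e] := qmap_surj m.
have Uy : U y by apply: contrapT => nU; apply: h1; exists y.
have Vy : V y by apply: contrapT => nV; apply: h2; exists y.
by have : (U `&` V) y by []; rewrite UV.
Qed.

Definition Lpart : set (adj g) := [set m | exists l, inl l = m].

Lemma Lpart_closed : closed Lpart.
Proof.
apply/adj_closedE.
have -> : qmap @^-1` Lpart = F; last exact: cF.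
rewrite eqEsubset; split => x.
  case=> l e; apply: contrapT => nF; by rewrite (qmap_nF nF) in e.
move=> Fx; exists (g (exist _ x (mem_set Fx))).
exact: (esym (qmap_val (exist _ x (mem_set Fx)))).
Qed.

Lemma inl_cts : continuous (fun l : L => (inl l : adj g)).
Proof.
apply/continuousP => U oU; rewrite -closedC.
have e : ~` ((fun l : L => (inl l : adj g)) @^-1` U) =
   g @` ((@set_val K F) @^-1` (qmap @^-1` (~` U))).
  rewrite eqEsubset; split => l.
    move=> nU; have [x gx] := sg l; exists x => //=.
    by rewrite qmap_val gx.
  by case=> x /=; rewrite qmap_val => nU <-.
rewrite e; apply: image_closed; apply: preimage_closed; first by move=> ? _; exact: val_cts.
apply: preimage_closed; first by move=> ? _; exact: qmap_cts.
exact: open_closedC.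
Qed.

Definition phi (l : L) : set_type Lpart := exist _ (inl l) (mem_set (ex_intro _ l erefl)).
Definition psi (m : set_type Lpart) : L := proj1_sig (cid (set_valP m)).
Lemma psi_spec m : inl (psi m) = set_val m.
Proof. exact: (proj2_sig (cid (set_valP m))). Qed.

Lemma homeo_L : homeomorphic L (set_type Lpart).
Proof.
exists phi, psi; split.
- by apply: cts_into; exact: inl_cts.
- apply/continuousP => V oV; apply/open_stP.
  have /open_stP [O oO eO] : open (g @^-1` V) by exact: ((continuousP _).1 cg).
  pose W : set (adj g) := [set m | match m with inl l => V l | inr _ => True end].
  exists W.
    rewrite adj_openE.
    have -> : qmap @^-1` W = O `|` ~` F.
      rewrite eqEsubset; split => x.
        case: (pselect (F x)) => Fx; last by right.
        pose x' : F := exist _ x (mem_set Fx).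
        rewrite /W /= (qmap_val x') => Vx; left.
        by have : (g @^-1` V) x' by []; rewrite eO.
      case: (pselect (F x)) => Fx; last by rewrite /W /= (qmap_nF Fx).
      pose x' : F := exist _ x (mem_set Fx).
      case=> // Ox; rewrite /W /= (qmap_val x').
      by have : (set_val @^-1` O) x' by []; rewrite -eO.
    by apply: openU => //; exact: closed_openC.
  rewrite eqEsubset; split => m /=; rewrite -psi_spec //.
- move=> l; have := psi_spec (phi l); by case.
- by move=> m; apply: val_inj; rewrite /= psi_spec.
Qed.

Lemma adj_main (C : topologicalType -> Prop) :
  class_of_compacta C -> C L -> perp_class' C K -> metrizable L.
Proof.
move=> [_ hC] CL [_ H].
have ci : cont_image K (adj g).
  split; first exact: adj_hausdorff.
  exists qmap; split; [exact: qmap_cts|exact: qmap_surj].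
have := H _ ci Lpart Lpart_closed (hC _ _ homeo_L CL).
apply: metrizable_homeo; exact: homeo_sym homeo_L.
Qed.

End Adj.

Theorem lemma2p3 (C : topologicalType -> Prop) :
  class_of_compacta C ->
  forall K : topologicalType, perp_class C K <-> perp_class' C K.
Proof.
move=> hC K; split.
  case=> cK H; split => // L [hL [f [cf fs]]] F cF CF.
  pose G := f @^-1` F.
  have cG : closed G by exact: preimage_closed.
  pose h (x : set_type G) : set_type F := exist _ (f (set_val x)) (mem_set (set_valP x)).
  apply: (H G cG (set_type F)) => //.
  split; first exact: st_hausdorff.
  exists h; split.
    apply: cts_into; have -> : (set_val \o h) = f \o set_val by [].
    move=> x; apply: continuous_comp; [exact: val_cts|exact: cf].
  move=> y; have [x ex] := fs (set_val y).
  have Gx : G x by rewrite /G /= ex; exact: set_valP.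
  by exists (exist _ x (mem_set Gx)); apply: val_inj; rewrite /= ex.
move=> Hp; split; first exact: Hp.1.
move=> F cF L [hL [g [cg sg]]] CL.
have [[cK hK] _] := Hp.
exact: (adj_main hK cK cF hL cg sg hC CL Hp).
Qed.
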